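(* Let $t,n\in\mathbb N$ and $\alpha_1,\alpha_2,\tau\geq 0$. Let $\mathcal H$ be an $n$-vertex hypergraph with codegree at most $t$ such that every edge has size at least $2(1+\alpha_2)^2$. Let $e\in\mathcal H$, $r:=|V(e)|$, $m_1:=|\{f\in N(e): |V(f)|\geq(1+\alpha_1)r\}|$ and $m_2:=|\{f\in N(e): (1+\alpha_1)r>|V(f)|\geq r/(1+\alpha_2)\}|$. Then (i) $(1+\alpha_1)m_1+\frac{m_2}{1+\alpha_2}\leq tn\left(1+\frac{1+\alpha_2}{r-1-\alpha_2}\right)$. Moreover, if $m_1+m_2\geq t(1-\tau)n$ and $\alpha_1>0$, then (ii) $m_1\leq\left(\tau+\frac{1+\alpha_2+\alpha_2 r}{r-1-\alpha_2}\right)\frac{tn}{\alpha_1}$.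
   Context: A hypergraph $\mathcal H$ has a finite vertex set $V(\mathcal H)$ and a finite set of edges, each edge $e$ with a nonempty set $V(e)\subseteq V(\mathcal H)$ (multiple edges allowed); $n$-vertex means $|V(\mathcal H)|=n$, and the size of $e$ is $|V(e)|$. The codegree of $\mathcal H$ is the maximum over distinct vertices $u,v$ of the number of edges containing both. $N(e)$ is the set of edges $f\neq e$ with $V(e)\cap V(f)\neq\emptyset$. *)

(* Defs.v *)
From HB Require Import structures.
From mathcomp Require Import all_boot all_order all_algebra.
Set Implicit Arguments. Unset Strict Implicit. Unset Printing Implicit Defensive.
Import Order.TTheory GRing.Theory Num.Theory.

(* A hypergraph: vertex type V (finite), edge index type E (finite, so
   multiple edges with the same vertex set are allowed), and the incidence
   map vert : E -> {set V}.  Nonemptiness of edges is a separate hypothesis. *)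

Definition codeg (V E : finType) (vert : E -> {set V}) (u v : V) : nat :=
  #|[set f : E | (u \in vert f) && (v \in vert f)]|.

Definition codegree_le (V E : finType) (vert : E -> {set V}) (t : nat) : Prop :=
  forall u v : V, u != v -> codeg vert u v <= t.

Definition nbhd (V E : finType) (vert : E -> {set V}) (e : E) : {set E} :=
  [set f : E | (f != e) && (vert e :&: vert f != set0)].

(* Main.v *)
Require Import Defs.
From HB Require Import structures.
From mathcomp Require Import all_boot all_order all_algebra.
From mathcomp Require Import ring lra.
Import Order.TTheory GRing.Theory Num.Theory.

Lemma key_nat (V E : finType) (vert : E -> {set V}) (t : nat) (e : E)
  (hcod : codegree_le vert t) :
  (\sum_(f in nbhd vert e) (#|vert f| - 1) <= #|vert e| * #|V| * t)%N.
Proof.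
pose F f u w := ((u \in vert f) && (w \in vert f) : nat).
apply: (@leq_trans (\sum_(f in nbhd vert e) \sum_(u in vert e) \sum_(w | w != u) F f u w)).
  apply: leq_sum => f; rewrite inE => /andP [_ /set0Pn [u]]; rewrite inE => /andP [ue uf].
  rewrite (bigD1 u) //= -[X in (X <= _)%N]addn0 leq_add //.
  rewrite (cardsD1 u (vert f)) uf add1n subSS /F uf /=.
  rewrite -big_mkcondr /= -sum1_card subn0; apply/eq_leq; apply: eq_bigl => w.
  by rewrite !inE andbC.
apply: (@leq_trans (\sum_f \sum_(u in vert e) \sum_(w | w != u) F f u w)).
  by rewrite [X in (_ <= X)%N](bigID (fun f => f \in nbhd vert e)) /= leq_addr.
rewrite exchange_big /= -mulnA -sum_nat_const; apply: leq_sum => u ue.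
rewrite exchange_big /=.
apply: (@leq_trans (\sum_(w : V) t)%N); last by rewrite sum_nat_const cardE leqnn.
rewrite [X in (_ <= X)%N](bigID (fun w => w != u)) /= -[X in (X <= _)%N]addn0 leq_add //.
apply: leq_sum => w wu; rewrite eq_sym in wu; apply: leq_trans (hcod u w wu); rewrite /codeg.
by rewrite -sum1_card [X in (_ <= X)%N]big_mkcond /=; apply/eq_leq; apply: eq_bigr => f _; rewrite inE /F; case: (_ && _).
Qed.

Local Open Scope ring_scope.

Theorem proposition3p6 (R : realFieldType) (V E : finType)
  (vert : E -> {set V}) (t : nat) (a1 a2 tau : R)
  (ha1 : 0 <= a1) (ha2 : 0 <= a2) (htau : 0 <= tau)
  (hne : forall f : E, vert f != set0)
  (hcod : codegree_le vert t)
  (hsize : forall f : E, 2 * (1 + a2) ^+ 2 <= (#|vert f|)%:R)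
  (e : E) :
  let n : R := (#|V|)%:R in
  let r : R := (#|vert e|)%:R in
  let m1 : R := (#|[set f in nbhd vert e | (1 + a1) * r <= (#|vert f|)%:R]|)%:R in
  let m2 : R := (#|[set f in nbhd vert e |
                    ((#|vert f|)%:R < (1 + a1) * r) && (r / (1 + a2) <= (#|vert f|)%:R)]|)%:R in
  ((1 + a1) * m1 + m2 / (1 + a2) <= t%:R * n * (1 + (1 + a2) / (r - 1 - a2)))
  /\
  (m1 + m2 >= t%:R * (1 - tau) * n -> 0 < a1 ->
     m1 <= (tau + (1 + a2 + a2 * r) / (r - 1 - a2)) * (t%:R * n / a1)).
Proof.
move=> n r m1 m2.
set S := nbhd vert e.
set A := [set f in S | (1 + a1) * r <= (#|vert f|)%:R].
set B := [set f in S | ((#|vert f|)%:R < (1 + a1) * r) && (r / (1 + a2) <= (#|vert f|)%:R)].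
pose g f : R := (#|vert f|)%:R - 1.
have hr : 1 + a2 < r.
  have := hsize e; rewrite -/r => h; nra.
set D := r - 1 - a2.
have hD : 0 < D by rewrite /D; lra.
have ha2p : 0 < 1 + a2 by lra.
have key : \sum_(f in S) g f <= r * n * t%:R.
  have := @key_nat V E vert t e hcod; rewrite -(ler_nat R) natr_sum !natrM -/r -/n.
  congr (_ <= _); apply: eq_bigr => f _; rewrite natrB //.
  by rewrite card_gt0 hne.
have gpos : forall f, 0 <= g f.
  by move=> f; rewrite /g subr_ge0 ler1n card_gt0 hne.
have eA : S :&: A = A.
  by apply/setP => f; rewrite in_setI [f \in A]inE; case: (f \in S).
have eB : (S :\: A) :&: B = B.
  apply/setP => f; rewrite in_setI in_setD [f \in A]inE [f \in B]inE; case: (f \in S) => //=.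
  by case: ltP => // _; rewrite andbF.
have split : \sum_(f in A) g f + \sum_(f in B) g f <= \sum_(f in S) g f.
  rewrite (big_setID (A := S) A) /= eA lerD2l (big_setID (A := S :\: A) B) /= eB.
  by rewrite lerDl sumr_ge0.
have hA : m1 * ((1 + a1) * D) <= \sum_(f in A) g f.
  rewrite /m1 mulr_natl -sumr_const; apply: ler_sum => f.
  rewrite inE => /andP [_ h]; rewrite /g /D; nra.
have hB : m2 * (D / (1 + a2)) <= \sum_(f in B) g f.
  rewrite /m2 mulr_natl -sumr_const; apply: ler_sum => f.
  rewrite inE => /andP [_ /andP [_ h]]; rewrite /g /D.
  suff : (r - 1 - a2) / (1 + a2) = r / (1 + a2) - 1 by move=> ->; lra.
  by field; rewrite gt_eqF.
have i1 : (1 + a1) * m1 + m2 / (1 + a2) <= r * n * t%:R / D.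
  rewrite ler_pdivlMr //.
  have -> : ((1 + a1) * m1 + m2 / (1 + a2)) * D = m1 * ((1 + a1) * D) + m2 * (D / (1 + a2)) by ring.
  lra.
have eR : t%:R * n * (1 + (1 + a2) / D) = r * n * t%:R / D.
  by rewrite /D; field; rewrite -/r gt_eqF //; lra.
split.
  by apply: (le_trans i1); rewrite -eR; exact: lexx.
move=> hm ha1p.
set X := t%:R * n.
have hX : 0 <= X by rewrite /X mulr_ge0.
have hm1 : 0 <= m1 by [].
have hm2 : 0 <= m2 by [].
set q := (1 + a2)^-1.
have hq : q * (1 + a2) = 1 by rewrite /q mulVf // gt_eqF.
have hq0 : 0 < q by rewrite /q invr_gt0.
set u := 1 + (1 + a2) / D.
have i1' : (1 + a1) * m1 + m2 * q <= X * u.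
  by apply: (le_trans i1); rewrite -eR; exact: lexx.
have hu : 1 <= u by rewrite /u lerDl divr_ge0 //; lra.
have ew : (1 + a2 + a2 * r) / D = u - 1 + a2 * u.
  by rewrite /u /D; field; rewrite -/r gt_eqF //; lra.
suff fin : m1 <= (tau + (u - 1 + a2 * u)) * (X / a1).
  by apply: (le_trans fin); rewrite ew; exact: lexx.
rewrite mulrA ler_pdivlMr //.
have hm' : X * (1 - tau) <= m1 + m2.
  by apply: le_trans hm; rewrite /X mulrAC; exact: lexx.
have f1 : q * m1 <= m1 by nra.
have f2 : q * (X * (1 - tau)) <= q * (m1 + m2) by rewrite ler_pM2l.
have f3 : X * a2 * q <= X * a2 * u by apply: ler_wpM2l; [nra | nra].
have f4 : 0 <= tau * X * (1 - q) by apply: mulr_ge0; [nra | nra].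
nra.
Qed.
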